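(* Let $f\in\mathbb{R}[X_1,\dots,X_n]$ be a non-constant polynomial of degree $2d$ with $f_{2d,i}>0$ for $i=1,\dots,n$. Then $f_{gp}=f_0-m^*$, where $m^*$ is the optimal value of the optimization problem $$\text{Minimize } \sum_{\alpha\in\Delta^{<2d}}(2d-|\alpha|)\left[\left(\frac{f_{\alpha}}{2d}\right)^{2d}\alpha^{\alpha}a_{\alpha}^{-\alpha}\right]^{\frac{1}{2d-|\alpha|}}$$ $$\text{subject to } \sum_{\alpha\in\Delta}\frac{a_{\alpha,i}}{f_{2d,i}}\le 1,\ i=1,\dots,n,\quad\text{and}\quad \frac{(2d)^{2d}a_{\alpha}^{\alpha}}{|f_{\alpha}|^{2d}\alpha^{\alpha}}=1,\ \alpha\in\Delta,\ |\alpha|=2d,$$ in the positive variables $a_{\alpha,i}$, $\alpha\in\Delta$, $i=1,\dots,n$, $\alpha_i\neq0$ (with $a_{\alpha,i}:=0$ when $\alpha_i=0$, and $a_\alpha=(a_{\alpha,1},\dots,a_{\alpha,n})$). Moreover this problem is a geometric program: the objective and the inequality-constraint functions are posynomials, and the equality-constraint functions are monomial functions, in these variables.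
   Context: $\mathbb{N}=\{0,1,2,\dots\}$. For $\alpha\in\mathbb{N}^n$ write $\underline{X}^\alpha=X_1^{\alpha_1}\cdots X_n^{\alpha_n}$, $|\alpha|=\sum_i\alpha_i$, and for $a\in\mathbb{R}^n$, $a^{\alpha}=\prod_i a_i^{\alpha_i}$ with $0^0=1$ ($a_\alpha^{-\alpha}$ means $1/a_\alpha^\alpha$). For $f=\sum_\alpha f_\alpha\underline{X}^\alpha$ of degree $2d$: $f_0$ constant term, $f_{2d,i}$ coefficient of $X_i^{2d}$, $\Omega=\{\alpha: f_\alpha\ne0\}\setminus\{\underline{0},2d\epsilon_1,\dots,2d\epsilon_n\}$, $\Delta=\{\alpha\in\Omega:\ f_\alpha<0\text{ or }\alpha_i\text{ odd for some }i\}$, $\Delta^{<2d}=\{\alpha\in\Delta:|\alpha|<2d\}$. $f_{gp}$ is the supremum (with $\sup\emptyset=-\infty$) of all $r\in\mathbb{R}$ for which there exist reals $a_{\alpha,i}\ge0$ ($\alpha\in\Delta$, $i=1,\dots,n$), $a_{\alpha,i}=0$ iff $\alpha_i=0$, with (1) $(2d)^{2d}a_\alpha^\alpha=|f_\alpha|^{2d}\alpha^\alpha$ for $\alpha\in\Delta$, $|\alpha|=2d$; (2) $f_{2d,i}\ge\sum_{\alpha\in\Delta}a_{\alpha,i}$ for all $i$; (3) $f_0-r\ge\sum_{\alpha\in\Delta^{<2d}}(2d-|\alpha|)\big[\frac{|f_\alpha|^{2d}\alpha^\alpha}{(2d)^{2d}a_\alpha^\alpha}\big]^{1/(2d-|\alpha|)}$.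 The optimal value $m^*$ is the infimum of the objective over the feasible set ($+\infty$ if the feasible set is empty). A monomial function on $\mathbb{R}_{>0}^N$ is $c x_1^{b_1}\cdots x_N^{b_N}$ with $c>0$, $b_j\in\mathbb{R}$; a posynomial is a finite sum of monomial functions. *)

(* Defs.v *)
From HB Require Import structures.
From mathcomp Require Import all_boot all_order all_algebra.
From mathcomp Require Import boolp classical_sets reals constructive_ereal ereal exp.
From mathcomp Require mpoly.

Canonical mpoly.mpoly_multinom__canonical__eqtype_SubType.
Canonical mpoly.mpoly_multinom__canonical__eqtype_Equality.
Canonical mpoly.mpoly_multinom__canonical__eqtype_SubEquality.
Canonical mpoly.mpoly_multinom__canonical__choice_Choice.
Canonical mpoly.mpoly_multinom__canonical__choice_SubChoice.
Canonical mpoly.mpoly_multinom__canonical__choice_Countable.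
Canonical mpoly.mpoly_multinom__canonical__choice_SubCountable.
Coercion mpoly.fun_of_multinom : mpoly.multinom >-> Funclass.

Set Implicit Arguments.
Unset Strict Implicit.
Unset Printing Implicit Defensive.

Import Order.TTheory GRing.Theory Num.Theory.
Local Open Scope ring_scope.

Section GP.
Variables (R : realType) (n : nat).

Notation mnm := (mpoly.multinom n).
Notation poly := (mpoly.mpoly n R).

Definition absm (a : mnm) : nat := mpoly.mdeg a.

(* total degree of f (this is (msize f).-1 ; 0 for f = 0) *)
Definition tdeg (f : poly) : nat := (\max_(m <- mpoly.msupp f) mpoly.mdeg m)%N.

Definition mnm_pure (k : nat) (i : 'I_n) : mnm :=
  mpoly.Multinom [tuple (if j == i then k else 0%N) | j < n].

Definition f0 (f : poly) : R := mpoly.mcoeff (@mpoly.mnm0 n) f.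

Definition ftop (f : poly) (d : nat) (i : 'I_n) : R :=
  mpoly.mcoeff (mnm_pure (2 * d) i) f.

Definition Omega (f : poly) (d : nat) : seq mnm :=
  [seq a : mnm <- mpoly.msupp f | (a != @mpoly.mnm0 n) &&
                            [forall i : 'I_n, a != mnm_pure (2 * d) i]].

Definition Delta (f : poly) (d : nat) : seq mnm :=
  [seq a : mnm <- Omega f d | (mpoly.mcoeff a f < 0) || [exists i : 'I_n, odd (a i)]].

Definition Delta_lt (f : poly) (d : nat) : seq mnm :=
  [seq a : mnm <- Delta f d | (absm a < 2 * d)%N].

(* a_alpha^alpha = prod_i a_{alpha,i}^{alpha_i}  (0^0 = 1) *)
Definition powa (a : mnm -> 'I_n -> R) (al : mnm) : R :=
  \prod_(i < n) (a al i) ^+ (al i).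

Definition powself (al : mnm) : R :=
  \prod_(i < n) ((al i)%:R : R) ^+ (al i).

Definition gp_bracket (f : poly) (d : nat) (a : mnm -> 'I_n -> R) (al : mnm) : R :=
  `|mpoly.mcoeff al f| ^+ (2 * d) * powself al /
    (((2 * d)%:R : R) ^+ (2 * d) * powa a al).

Definition gp_sum (f : poly) (d : nat) (a : mnm -> 'I_n -> R) : R :=
  \sum_(al <- Delta_lt f d)
    ((2 * d - absm al)%:R * powR (gp_bracket f d a al) ((2 * d - absm al)%:R)^-1).

(* f_gp : supremum (in \bar R, sup of empty set = -oo) *)
Definition fgp_admissible (f : poly) (d : nat) (r : R) : Prop :=
  exists a : mnm -> 'I_n -> R,
    [/\ (forall al i, al \in Delta f d -> 0 <= a al i),
        (forall al i, al \in Delta f d -> (a al i = 0 <-> al i = 0%N)),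
        (forall al, al \in Delta f d -> absm al = (2 * d)%N ->
            ((2 * d)%:R : R) ^+ (2 * d) * powa a al =
            `|mpoly.mcoeff al f| ^+ (2 * d) * powself al),
        (forall i, \sum_(al <- Delta f d) a al i <= ftop f d i) &
        f0 f - r >= gp_sum f d a].

Definition fgp (f : poly) (d : nat) : \bar R :=
  ereal_sup [set (r%:E)%E | r in fgp_admissible f d].

(* ---- the geometric program of Corollary 3.6 ----
   Variables a_{alpha,i}, alpha in Delta, alpha_i <> 0, represented by a
   function a : mnm -> 'I_n -> R (other entries irrelevant); the convention
   a_{alpha,i} := 0 when alpha_i = 0 is implemented by zext. *)
Definition zext (a : mnm -> 'I_n -> R) : mnm -> 'I_n -> R :=
  fun al i => if al i == 0%N then 0 else a al i.

Definition gp_pos (f : poly) (d : nat) (a : mnm -> 'I_n -> R) : Prop :=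
  forall al i, al \in Delta f d -> al i != 0%N -> 0 < a al i.

Definition gp_obj (f : poly) (d : nat) (a : mnm -> 'I_n -> R) : R :=
  \sum_(al <- Delta_lt f d)
    ((2 * d - absm al)%:R *
      powR ((mpoly.mcoeff al f / (2 * d)%:R) ^+ (2 * d) * powself al
             / powa (zext a) al)
           ((2 * d - absm al)%:R)^-1).

Definition gp_ineq (f : poly) (d : nat) (i : 'I_n) (a : mnm -> 'I_n -> R) : R :=
  \sum_(al <- Delta f d) zext a al i / ftop f d i.

Definition gp_eq (f : poly) (d : nat) (al : mnm) (a : mnm -> 'I_n -> R) : R :=
  ((2 * d)%:R : R) ^+ (2 * d) * powa (zext a) al /
    (`|mpoly.mcoeff al f| ^+ (2 * d) * powself al).

Definition gp_feasible (f : poly) (d : nat) (a : mnm -> 'I_n -> R) : Prop :=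
  [/\ gp_pos f d a,
      (forall i, gp_ineq f d i a <= 1) &
      (forall al, al \in Delta f d -> absm al = (2 * d)%N -> gp_eq f d al a = 1)].

(* optimal value m^* (inf of empty set = +oo) *)
Definition mstar (f : poly) (d : nat) : \bar R :=
  ereal_inf [set ((gp_obj f d a)%:E)%E | a in gp_feasible f d].

Definition gp_monom (f : poly) (d : nat) (b : mnm -> 'I_n -> R)
    (a : mnm -> 'I_n -> R) : R :=
  \prod_(al <- Delta f d) \prod_(i < n | al i != 0%N) powR (a al i) (b al i).

Definition is_monomial_fn (f : poly) (d : nat) (F : (mnm -> 'I_n -> R) -> R) : Prop :=
  exists c : R, exists b : mnm -> 'I_n -> R,
    0 < c /\ forall a, gp_pos f d a -> F a = c * gp_monom f d b a.

Definition is_posynomial (f : poly) (d : nat) (F : (mnm -> 'I_n -> R) -> R) : Prop :=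
  exists s : seq (R * (mnm -> 'I_n -> R)),
    all (fun p => 0 < p.1) s /\
    forall a, gp_pos f d a -> F a = \sum_(p <- s) p.1 * gp_monom f d p.2 a.

End GP.

(* Main.v *)
Require Import Defs.
From HB Require Import structures.
From mathcomp Require Import all_boot all_order all_algebra.
From mathcomp Require Import boolp classical_sets reals constructive_ereal ereal exp.
From mathcomp Require mpoly.
From mathcomp Require Import ring lra zify.
Local Open Scope ring_scope.
Import Order.TTheory GRing.Theory Num.Theory.
Local Open Scope ring_scope.

Section Helpers.
Variables (R : realType) (n d : nat) (f : mpoly.mpoly n R).

Lemma Delta_uniq : uniq (Delta f d).
Proof. by rewrite /Delta /Omega !filter_uniq // mpoly.msupp_uniq. Qed.

Lemma Delta_coef al : al \in Delta f d -> mpoly.mcoeff al f != 0.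
Proof.
by rewrite /Delta /Omega !mem_filter => /andP[_ /andP[_ H]]; rewrite -mpoly.mcoeff_msupp.
Qed.

Lemma Delta_lt_mem al : al \in Delta_lt f d -> al \in Delta f d /\ (absm al < 2 * d)%N.
Proof. by rewrite /Delta_lt mem_filter => /andP[? ?]. Qed.

Lemma powself_gt0 (al : mpoly.multinom n) : 0 < powself R al.
Proof.
apply: prodr_gt0 => i _; case: (al i) => [|k]; first by rewrite expr0.
by apply: exprn_gt0; rewrite ltr0n.
Qed.

Lemma powR_prod (I : Type) (s : seq I) (P : pred I) (F : I -> R) (r : R) :
  (forall i, P i -> 0 <= F i) ->
  powR (\prod_(i <- s | P i) F i) r = \prod_(i <- s | P i) powR (F i) r.
Proof.
move=> H.
pose K := fun y1 y2 : R => 0 <= y1 /\ powR y1 r = y2.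
suff : K (\prod_(i <- s | P i) F i) (\prod_(i <- s | P i) powR (F i) r) by case.
apply: (big_rec2 K); first by split; [exact: ler01 | rewrite powR1].
move=> i y1 y2 Pi [y1g e]; split; first by rewrite mulr_ge0 // H.
by rewrite powRM ?H // e.
Qed.

Lemma monom_single al e a : al \in Delta f d ->
  gp_monom f d (fun al' j => if al' == al then e j else 0) a =
  \prod_(j < n | al j != 0%N) powR (a al j) (e j).
Proof.
move=> Hal; rewrite /gp_monom (bigD1_seq al) ?Delta_uniq //=.
rewrite eqxx [X in _ * X]big1 ?mulr1 // => al' /negbTE ->.
by apply: big1 => j _; rewrite powRr0.
Qed.

Lemma bracket_eq a al : gp_bracket f d a al =
  (mpoly.mcoeff al f / (2 * d)%:R) ^+ (2 * d) * powself R al / powa a al.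
Proof.
rewrite /gp_bracket expr_div_n -normrX ger0_norm; last first.
  by apply: exprn_even_ge0; rewrite oddM.
by rewrite !invfM !mulrA; congr (_ * _); rewrite mulrAC.
Qed.

Lemma obj_sum a : gp_obj f d a = gp_sum f d (zext a).
Proof. by apply: eq_bigr => al _; rewrite bracket_eq. Qed.

Lemma sum_ext a b : (forall al, al \in Delta f d -> a al = b al) ->
  gp_sum f d a = gp_sum f d b.
Proof.
move=> H; apply: eq_big_seq => al /Delta_lt_mem [Hal _].
by rewrite /gp_bracket /powa H.
Qed.

Lemma powa_gt0 a al : gp_pos f d a -> al \in Delta f d -> 0 < powa (zext a) al.
Proof.
move=> Hp Hal; apply: prodr_gt0 => i _; rewrite /zext.
case: eqP => [->|/eqP H]; first by rewrite expr0.
by apply: exprn_gt0; apply: Hp.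
Qed.

Lemma keyK r : (0 < d)%N -> (forall i, 0 < ftop f d i) ->
  fgp_admissible f d r <-> exists a, gp_feasible f d a /\ gp_obj f d a <= f0 f - r.
Proof.
move=> hd htop.
have Dgt0 : 0 < ((2 * d)%:R : R) by rewrite ltr0n muln_gt0.
have den_neq0 al : al \in Delta f d ->
    `|mpoly.mcoeff al f| ^+ (2 * d) * powself R al != 0.
  move=> Hal; rewrite mulf_neq0 ?expf_neq0 ?normr_eq0 ?Delta_coef //.
  by rewrite gt_eqF // powself_gt0.
split.
- case=> a [H0 Hiff Heq Hineq Hsum].
  have Hz : forall al, al \in Delta f d -> zext a al = a al.
    move=> al Hal; apply/funext => i; rewrite /zext.
    by case: eqP => // /(Hiff al i Hal).
  exists a; split; last by rewrite obj_sum (sum_ext _ _ Hz).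
  split.
  + move=> al i Hal Hi; rewrite lt_def H0 // andbT.
    by apply/eqP => /(Hiff al i Hal) /eqP; rewrite (negbTE Hi).
  + move=> i; rewrite /gp_ineq -mulr_suml ler_pdivrMr // mul1r.
    by rewrite (eq_big_seq (fun al => a al i)) // => al /Hz ->.
  + move=> al Hal Hab; rewrite /gp_eq /powa Hz // -/(powa a al) Heq //.
    by rewrite divff // den_neq0.
- case=> a [[Hp Hineq Heq] Hle]; exists (zext a); split.
  + move=> al i Hal; rewrite /zext; case: eqP => // /eqP Hi; apply: ltW.
    exact: Hp.
  + move=> al i Hal; rewrite /zext; case: eqP => // /eqP Hi; split => //.
    by move=> Ha; move: (Hp al i Hal Hi); rewrite Ha ltxx.
    by move=> /eqP; rewrite (negbTE Hi).
  + move=> al Hal Hab; have := Heq al Hal Hab; rewrite /gp_eq.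
    exact: divr1_eq.
  + by move=> i; have := Hineq i; rewrite /gp_ineq -mulr_suml ler_pdivrMr // mul1r.
  + by rewrite -obj_sum.
Qed.

Lemma obj_posy : (0 < d)%N -> is_posynomial f d (gp_obj f d).
Proof.
move=> hd.
pose m (al : mpoly.multinom n) := ((2 * d - absm al)%:R : R).
pose X al := (mpoly.mcoeff al f / (2 * d)%:R) ^+ (2 * d) * powself R al.
exists [seq (m al * powR (X al) (m al)^-1,
   fun al' j => if al' == al then - ((al j)%:R / m al) else 0) | al <- Delta_lt f d].
split.
- rewrite all_map; apply/allP => al /Delta_lt_mem [Hal Hlt] /=.
  apply: mulr_gt0; first by rewrite ltr0n subn_gt0.
  apply: powR_gt0; apply: mulr_gt0; last exact: powself_gt0.
  rewrite exprn_even_gt0 ?oddM // mulf_neq0 ?Delta_coef ?orbT //.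
  by rewrite invr_eq0 pnatr_eq0 muln_eq0 negb_or /=; rewrite -lt0n hd.
- move=> a Hp; rewrite big_map; apply: eq_big_seq => al /Delta_lt_mem [Hal _].
  rewrite monom_single //.
  have Xge0 : 0 <= X al.
    apply: mulr_ge0; last exact: ltW (powself_gt0 al).
    by apply: exprn_even_ge0; rewrite oddM.
  have Pge0 : 0 <= powa (zext a) al by apply: ltW; apply: powa_gt0.
  rewrite -/(X al) -/(m al) powRM ?invr_ge0 // -mulrA; congr (_ * (_ * _)).
  rewrite -powR_inv1 // -powRrM mulN1r powRN /powa powR_prod; last first.
    move=> i _; rewrite /zext; case: eqP => [->|Hi]; first by rewrite expr0.
    by apply: exprn_ge0; apply: ltW; apply: Hp => //; apply/eqP.
  rewrite -prodfV [RHS]big_mkcond; apply: eq_bigr => j _ /=; rewrite /zext.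
  case: eqP => [->|/eqP Hj] /=; first by rewrite expr0 powR1 invr1.
  by rewrite -powR_mulrn ?(ltW (Hp _ _ Hal Hj)) // -powRrM -powRN.
Qed.

Lemma ineq_posy i : (forall i, 0 < ftop f d i) -> is_posynomial f d (gp_ineq f d i).
Proof.
move=> htop.
exists [seq ((ftop f d i)^-1, fun al' j => if al' == al then (if j == i then 1 else 0) else 0)
       | al <- [seq al : mpoly.multinom n <- Delta f d | al i != 0%N]].
split.
- by rewrite all_map; apply/allP => al _ /=; rewrite invr_gt0.
- move=> a Hp; rewrite big_map big_filter /gp_ineq [RHS]big_mkcond /=.
  apply: eq_big_seq => al Hal; rewrite /zext; case: eqP => [_|/eqP Hi] /=.
    by rewrite mul0r.
  rewrite monom_single // (bigD1 i) //= eqxx big1; last first.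
    by move=> j /andP[_ /negbTE ->]; rewrite powRr0.
  by rewrite mulr1 powRr1 ?(ltW (Hp _ _ Hal Hi)) // mulrC.
Qed.

Lemma eq_monom al : (0 < d)%N -> al \in Delta f d -> is_monomial_fn f d (gp_eq f d al).
Proof.
move=> hd Hal.
have Dgt0 : 0 < ((2 * d)%:R : R) by rewrite ltr0n muln_gt0.
exists (((2 * d)%:R : R) ^+ (2 * d) / (`|mpoly.mcoeff al f| ^+ (2 * d) * powself R al)).
exists (fun al' j => if al' == al then (al j)%:R else 0).
split.
- apply: divr_gt0; first exact: exprn_gt0.
  apply: mulr_gt0; last exact: powself_gt0.
  by apply: exprn_gt0; rewrite normr_gt0 Delta_coef.
- move=> a Hp; rewrite monom_single // /gp_eq mulrAC; congr (_ * _).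
  rewrite /powa [RHS]big_mkcond; apply: eq_bigr => j _ /=; rewrite /zext.
  case: eqP => [->|/eqP Hj] /=; first by rewrite expr0.
  by rewrite powR_mulrn ?(ltW (Hp _ _ Hal Hj)).
Qed.

End Helpers.

Theorem corollary3p6 (R : realType) (n d : nat) (f : mpoly.mpoly n R) :
  (0 < tdeg f)%N ->
  tdeg f = (2 * d)%N ->
  (forall i : 'I_n, 0 < ftop f d i) ->
  [/\ fgp f d = ((f0 f)%:E - mstar f d)%E,
      is_posynomial f d (gp_obj f d),
      (forall i : 'I_n, is_posynomial f d (gp_ineq f d i)) &
      (forall al, al \in Delta f d -> absm al = (2 * d)%N ->
         is_monomial_fn f d (gp_eq f d al))].
Proof.
move=> ht htd htop.
have hd : (0 < d)%N by move: ht; rewrite htd; lia.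
split; last first.
- by move=> al Hal _; exact: eq_monom.
- by move=> i; exact: ineq_posy.
- exact: obj_posy.
have obj_ge0 a : 0 <= gp_obj f d a.
  by apply: sumr_ge0 => al _; apply: mulr_ge0; [exact: ler0n | exact: powR_ge0].
have Hm0 : (0 <= mstar f d)%E.
  by apply: le_ereal_inf_tmp => _ [a _ <-]; rewrite lee_fin.
apply/eqP; rewrite eq_le; apply/andP; split.
- apply: ge_ereal_sup => _ [r Hr <-].
  have [a [Ha Hle]] := (@keyK _ _ _ f r hd htop).1 Hr.
  have Hm : (mstar f d <= (gp_obj f d a)%:E)%E.
    by apply: ereal_inf_lbound; exists a.
  move: Hm Hm0; case: (mstar f d) => [y||] //=.
  + by rewrite !lee_fin => Hy _; lra.
- have Hlb : ((f0 f)%:E - fgp f d <= mstar f d)%E.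
    apply: le_ereal_inf_tmp => _ [a Ha <-].
    have Hs : ((f0 f - gp_obj f d a)%:E <= fgp f d)%E.
      apply: ereal_sup_ubound; exists (f0 f - gp_obj f d a) => //.
      by apply/keyK => //; exists a; split => //; lra.
    move: Hs; case: (fgp f d) => [x||] //=.
    + by rewrite !lee_fin => Hx; lra.
    + by move=> _; exact: leNye.
  move: Hlb Hm0; case: (fgp f d) => [x||]; case: (mstar f d) => [y||] //=.
  + by rewrite !lee_fin => Hx _; lra.
  + by move=> _ _; rewrite addeNy leNye.
  + by move=> _ _; exact: leey.
Qed.
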